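(* Let $C$ be a cone in $\mathbb{R}^n$ and let $X$ and $Y$ be nonempty decomposably $C$-antichain-convex subsets of $\mathbb{R}^n$. (1) If $X$ is $C$-upward and $\operatorname{ri}(X)\cap Y=\emptyset$, then $X$ and $Y$ are properly separated. (2) If $X$ is $C$-downward and $\operatorname{ri}(X)\cap Y=\emptyset$, then $X$ and $Y$ are properly separated.
   Context: A cone in $\mathbb{R}^n$ is a subset $C$ with $\lambda C\subseteq C$ for all $\lambda>0$ (possibly empty, need not contain $0$). $S$ is $C$-antichain-convex iff for all $x,y\in S$ and $\lambda\in[0,1]$ with $y-x\notin C\cup(-C)$ one has $\lambda x+(1-\lambda)y\in S$; $S$ is decomposably $C$-antichain-convex iff it is a Minkowski sum of finitely many $C$-antichain-convex sets. $S$ is $C$-upward iff $S+C\subseteq S$; $C$-downward iff $S-C\subseteq S$. $\operatorname{ri}(Z)$ is the relative interior of $Z$ (interior relative to its affine hull). $X$ and $Y$ are properly separated iff there is a linear functional $f$ on $\mathbb{R}^n$ with $\sup f[X]\le\inf f[Y]$ and $\inf f[X]<\sup f[Y]$. *)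

(* Defs.v *)
From mathcomp Require Import all_boot all_order all_algebra.
From mathcomp Require Import all_classical all_reals ereal.
Set Implicit Arguments. Unset Strict Implicit. Unset Printing Implicit Defensive.
Import Order.TTheory GRing.Theory Num.Theory.
Local Open Scope classical_set_scope.
Local Open Scope ring_scope.

Section Defs.
Variables (R : realType) (n : nat).
Notation V := 'rV[R]_n.

(* a cone: closed under positive scaling (may be empty, need not contain 0) *)
Definition is_cone (C : set V) : Prop :=
  forall (lam : R) (c : V), 0 < lam -> C c -> C (lam *: c).

Definition negset (C : set V) : set V := [set - c | c in C].

Definition antichain_convex (C S : set V) : Prop :=
  forall (x y : V) (lam : R), S x -> S y -> 0 <= lam <= 1 ->
    ~ (C `|` negset C) (y - x) -> S (lam *: x + (1 - lam) *: y).

Definition minkowski_sum (k : nat) (S : 'I_k -> set V) : set V :=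
  [set x | exists p : 'I_k -> V, (forall i, S i (p i)) /\ x = \sum_(i < k) p i].

Definition decomp_antichain_convex (C X : set V) : Prop :=
  exists (k : nat) (S : 'I_k -> set V),
    (forall i, antichain_convex C (S i)) /\ X = minkowski_sum S.

Definition upward (C X : set V) : Prop := forall x c, X x -> C c -> X (x + c).
Definition downward (C X : set V) : Prop := forall x c, X x -> C c -> X (x - c).

Definition aff_hull (Z : set V) : set V :=
  [set x | exists (k : nat) (w : 'I_k -> R) (p : 'I_k -> V),
     (forall i, Z (p i)) /\ \sum_(i < k) w i = 1 /\ x = \sum_(i < k) w i *: p i].

Definition rel_interior (Z : set V) : set V :=
  [set x | Z x /\ exists e : R, 0 < e /\
     forall y, aff_hull Z y -> (forall j, `|y ord0 j - x ord0 j| < e) -> Z y].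

Definition linear_functional (f : V -> R) : Prop :=
  forall (a : R) (x y : V), f (a *: x + y) = a * f x + f y.

Definition properly_separated (X Y : set V) : Prop :=
  exists f : V -> R, linear_functional f /\
    (ereal_sup [set (f x)%:E | x in X] <= ereal_inf [set (f y)%:E | y in Y])%E /\
    (ereal_inf [set (f x)%:E | x in X] < ereal_sup [set (f y)%:E | y in Y])%E.

End Defs.

(* Main.v *)
Require Import Defs.
From mathcomp Require Import all_boot all_order all_algebra.
From mathcomp Require Import all_classical all_reals ereal.
From mathcomp Require Import ring lra.
Set Implicit Arguments. Unset Strict Implicit. Unset Printing Implicit Defensive.
Import Order.TTheory GRing.Theory Num.Theory.
Local Open Scope classical_set_scope.
Local Open Scope ring_scope.

Lemma lfD (R : realType) n (f : 'rV[R]_n -> R) : linear_functional f ->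
  forall x y, f (x + y) = f x + f y.
Proof. by move=> lf x y; rewrite -[x in LHS]scale1r lf mul1r. Qed.

Lemma lf0 (R : realType) n (f : 'rV[R]_n -> R) : linear_functional f -> f 0 = 0.
Proof. move=> lf; have := lfD lf 0 0; rewrite addr0 => /eqP; rewrite -subr_eq0 opprD addrA subrr add0r oppr_eq0 => /eqP. by []. Qed.

Lemma lfZ (R : realType) n (f : 'rV[R]_n -> R) : linear_functional f ->
  forall a x, f (a *: x) = a * f x.
Proof. by move=> lf a x; rewrite -[a *: x]addr0 lf (lf0 lf) addr0. Qed.

Lemma lfN (R : realType) n (f : 'rV[R]_n -> R) : linear_functional f ->
  forall x, f (- x) = - f x.
Proof. by move=> lf x; rewrite -scaleN1r (lfZ lf) mulN1r. Qed.

Lemma lfB (R : realType) n (f : 'rV[R]_n -> R) : linear_functional f ->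
  forall x y, f (x - y) = f x - f y.
Proof. by move=> lf x y; rewrite (lfD lf) (lfN lf). Qed.

Lemma lim0 (R : realType) (a b : R) : (forall t, 0 < t -> 0 <= a + t * b) -> 0 <= a.
Proof.
move=> H; rewrite leNgt; apply/negP => a0.
have [b0|b0] := lerP b 0.
  by have := H 1 ltr01; rewrite mul1r; lra.
have t0 : 0 < - a / (2 * b) by rewrite divr_gt0 //; lra.
have := H _ t0.
have -> : - a / (2 * b) * b = - a / 2 by field; apply/eqP; lra.
lra.
Qed.

Definition hd (R : realType) n (v : 'rV[R]_n.+1) : R := v 0 ord0.
Definition tl (R : realType) n (v : 'rV[R]_n.+1) : 'rV[R]_n := \row_j v 0 (lift ord0 j).

Arguments hd {R n}.
Arguments tl {R n}.
Lemma hdD (R : realType) n (x y : 'rV[R]_n.+1) : hd (x + y) = hd x + hd y.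
Proof. by rewrite /hd mxE. Qed.
Lemma hdZ (R : realType) n a (x : 'rV[R]_n.+1) : hd (a *: x) = a * hd x.
Proof. by rewrite /hd mxE. Qed.
Lemma tlD (R : realType) n (x y : 'rV[R]_n.+1) : tl (x + y) = tl x + tl y.
Proof. by apply/rowP => j; rewrite !mxE. Qed.
Lemma tlZ (R : realType) n a (x : 'rV[R]_n.+1) : tl (a *: x) = a *: tl x.
Proof. by apply/rowP => j; rewrite !mxE. Qed.
Lemma hdtl0 (R : realType) n (x : 'rV[R]_n.+1) : hd x = 0 -> tl x = 0 -> x = 0.
Proof.
move=> h t; apply/rowP => j; rewrite mxE.
case: (unliftP ord0 j) => [j'|] ->; last by [].
by move/rowP: t => /(_ j'); rewrite !mxE.
Qed.
Lemma tl0 (R : realType) n : tl (0 : 'rV[R]_n.+1) = 0.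
Proof. by apply/rowP => j; rewrite !mxE. Qed.
Lemma hd0 (R : realType) n : hd (0 : 'rV[R]_n.+1) = 0.
Proof. by rewrite /hd mxE. Qed.
Lemma sq_gt0 (R : realType) (x : R) : x != 0 -> 0 < x * x.
Proof. by move=> x0; rewrite lt0r mulf_neq0 //= -expr2 sqr_ge0. Qed.
Lemma mul_lt0_neq0 (R : realType) (a b : R) : a * b < 0 -> a != 0.
Proof. by move=> h; apply/eqP => a0; rewrite a0 mul0r ltxx in h. Qed.
Lemma divineq (R : realType) (x y a b : R) : 0 < a -> 0 < b -> 0 <= b * x + a * y ->
  - x / a <= y / b.
Proof.
move=> a0 b0 h.
have -> : - x / a = (- x * b) * (a * b)^-1 by field; apply/andP; split; apply/lt0r_neq0.
have -> : y / b = (y * a) * (a * b)^-1 by field; apply/andP; split; apply/lt0r_neq0.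
rewrite ler_pM2r ?invr_gt0 ?mulr_gt0 //; lra.
Qed.
Lemma h1 (R : realType) (l g c : R) : c < 0 -> l <= g / (- c) -> 0 <= g + l * c.
Proof.
move=> c0 hl; have b0 : 0 < - c by lra.
have := ler_wpM2r (ltW b0) hl; rewrite divfK ?lt0r_neq0 //; nra.
Qed.
Lemma h2 (R : realType) (l g c : R) : 0 < c -> - g / c <= l -> 0 <= g + l * c.
Proof.
move=> c0 hl.
have := ler_wpM2r (ltW c0) hl; rewrite divfK ?lt0r_neq0 //; nra.
Qed.

Definition sepf (R : realType) n (K : set 'rV[R]_n) :=
  exists f, linear_functional f /\ (forall k, K k -> 0 <= f k) /\ exists k, K k /\ 0 < f k.

Lemma sep_cone (R : realType) n (K : set 'rV[R]_n) :
  (forall a b, K a -> K b -> K (a + b)) ->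
  (forall t a, 0 < t -> K a -> K (t *: a)) ->
  K !=set0 -> ~ K 0 -> sepf K.
Proof.
elim: n K => [|n IH] K Kadd Kscale [k0' Kk0'] K0.
  by exfalso; apply: K0; rewrite -(thinmx0 k0').
have [[k0 [Kk0 tk0]]|noB] := pselect (exists k, K k /\ tl k = 0); last first.
  have [||||g [lg [g0 [k' [[k Kk <-] gk]]]]] := IH (tl @` K).
  - move=> _ _ [a Ka <-] [b Kb <-]; exists (a + b); [exact: Kadd | exact: tlD].
  - move=> t _ t0 [a Ka <-]; exists (t *: a); [exact: Kscale | exact: tlZ].
  - by exists (tl k0'), k0'.
  - by move=> [k Kk tk]; apply: noB; exists k.
  exists (fun v => g (tl v)); split; [|split].
  - by move=> a x y; rewrite tlD tlZ lg.
  - by move=> k1 Kk1; apply: g0; exists k1.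
  - by exists k.
set tau := hd k0.
have tau0 : tau != 0.
  by apply/eqP => h; apply: K0; rewrite -(hdtl0 h tk0).
pose L := [set k | K k /\ hd k * tau < 0].
have [Lne|Le] := pselect (L !=set0); last first.
  exists (fun v => tau * hd v); split; [|split].
  - by move=> a x y; rewrite hdD hdZ; ring.
  - move=> k Kk; rewrite leNgt; apply/negP => h; apply: Le; exists k; split => //.
    by rewrite mulrC.
  - by exists k0; split => //; rewrite sq_gt0.
have L0 : ~ (tl @` L) 0.
  move=> [k [Kk hk] tk]; apply: K0.
  have hk0 := mul_lt0_neq0 hk.
  have -> : (0 : 'rV_n.+1) = `|hd k| *: k0 + `|tau| *: k.
    apply/esym/hdtl0; last by rewrite tlD !tlZ tk tk0 !scaler0 addr0.
    rewrite hdD !hdZ -/tau.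
    have [t0|t0] := ltrP 0 tau.
      have a0 : hd k < 0 by nra.
      rewrite (gtr0_norm t0) (ltr0_norm a0); ring.
    have t0' : tau < 0 by rewrite lt_neqAle tau0.
    have a0 : 0 < hd k by nra.
    rewrite (ltr0_norm t0') (gtr0_norm a0); ring.
  by apply: Kadd; apply: Kscale => //; rewrite normr_gt0.
have [||||g [lg [g0 [_ [[k1 [Kk1 hk1] <-] gk1]]]]] := IH (tl @` L).
- move=> _ _ [a [Ka ha] <-] [b [Kb hb] <-]; exists (a + b); last exact: tlD.
  by split; [exact: Kadd | rewrite hdD mulrDl; lra].
- move=> t _ t0 [a [Ka ha] <-]; exists (t *: a); last exact: tlZ.
  by split; [exact: Kscale | rewrite hdZ -mulrA; nra].
- by case: Lne => k Lk; exists (tl k), k.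
- exact: L0.
have F0 : forall k, K k -> hd k * tau = 0 -> 0 <= g (tl k).
  move=> k Kk hk; apply: (@lim0 _ _ (g (tl k1))) => t t0.
  have : (tl @` L) (tl (k + t *: k1)).
    exists (k + t *: k1) => //; split; first by apply: Kadd => //; exact: Kscale.
    by rewrite hdD hdZ mulrDl hk add0r -mulrA; nra.
  by move/g0; rewrite tlD tlZ (lfD lg) (lfZ lg).
have key : forall k k', K k -> 0 < hd k * tau -> K k' -> hd k' * tau < 0 ->
    - g (tl k) / (hd k * tau) <= g (tl k') / (- (hd k' * tau)).
  move=> k k' Kk hk Kk' hk'.
  apply: divineq => //; first by lra.
  have := F0 ((- (hd k' * tau)) *: k + (hd k * tau) *: k') _ _.
  rewrite tlD !tlZ (lfD lg) !(lfZ lg); apply.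
  - by apply: Kadd; apply: Kscale => //; lra.
  - by rewrite hdD !hdZ; ring.
pose A := [set - g (tl k) / (hd k * tau) | k in [set k | K k /\ 0 < hd k * tau]].
have An : A !=set0.
  by exists (- g (tl k0) / (hd k0 * tau)), k0 => //; split => //; rewrite sq_gt0.
have Aub : forall k', K k' -> hd k' * tau < 0 -> ubound A (g (tl k') / (- (hd k' * tau))).
  by move=> k' Kk' hk' _ [k [Kk hk] <-]; apply: key.
have Ahs : has_sup A.
  by split => //; exists (g (tl k1) / (- (hd k1 * tau))); apply: Aub.
set lam := sup A.
have lamA : forall k, K k -> 0 < hd k * tau -> - g (tl k) / (hd k * tau) <= lam.
  by move=> k Kk hk; apply: sup_upper_bound => //; exists k.
have lamB : forall k, K k -> hd k * tau < 0 -> lam <= g (tl k) / (- (hd k * tau)).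
  by move=> k Kk hk; apply: ge_sup => //; apply: Aub.
have lam0 : 0 <= lam.
  have := lamA k0 Kk0 (sq_gt0 tau0); by rewrite tk0 (lf0 lg) oppr0 mul0r.
exists (fun v => g (tl v) + lam * (hd v * tau)); split; [|split].
- by move=> a x y; rewrite tlD tlZ lg hdD hdZ; ring.
- move=> k Kk; have [h|h|h] := ltrgtP (hd k * tau) 0.
  + by apply: h1 => //; apply: lamB.
  + by apply: h2 => //; apply: lamA.
  + by rewrite h mulr0 addr0; apply: F0.
- move: lam0; rewrite le_eqVlt => /orP [/eqP l0|l0].
  + by exists k1; split => //; rewrite -l0 mul0r addr0.
  + exists k0; split => //; rewrite tk0 (lf0 lg) add0r mulr_gt0 //; exact: sq_gt0.
Qed.

Lemma sep_cone2 (R : realType) n (K : set 'rV[R]_n) k0 :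
  (forall a b, K a -> K b -> K (a + b)) ->
  (forall t a, 0 < t -> K a -> K (t *: a)) ->
  K k0 -> ~ K (- k0) -> sepf K.
Proof.
move=> Kadd Kscale Kk0 Kn.
pose M := [set v | exists k t, K k /\ 0 < t /\ v = k + t *: k0].
have [||||f [lf [f0 [m [[k [t [Kk [t0 ->]]]] fm]]]]] := @sep_cone R n M.
- move=> _ _ [k [t [Kk [t0 ->]]]] [k' [t' [Kk' [t0' ->]]]].
  exists (k + k'), (t + t'); do 2?split; [exact: Kadd | lra |].
  by rewrite scalerDl; rewrite addrACA.
- move=> s _ s0 [k [t [Kk [t0 ->]]]]; exists (s *: k), (s * t).
  by do 2?split; [exact: Kscale | exact: mulr_gt0 | rewrite scalerDr scalerA].
- by exists (k0 + 1 *: k0), k0, 1; do 2?split => //; exact: ltr01.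
- move=> [k [t [Kk [t0 e]]]]; apply: Kn.
  have -> : - k0 = t^-1 *: k.
    have -> : k = - (t *: k0) by apply/eqP; rewrite -addr_eq0 -e.
    by rewrite scalerN scalerA mulVf ?scale1r // lt0r_neq0.
  by apply: Kscale => //; rewrite invr_gt0.
have fk0 : 0 <= f k0.
  have Mk : M (k0 + 1 *: k0) by exists k0, 1; do 2?split => //; exact: ltr01.
  have := f0 _ Mk.
  by rewrite scale1r (lfD lf); lra.
exists f; split => //; split.
  move=> k' Kk'; apply: (@lim0 _ _ (f k0)) => s s0.
  have Mk : M (k' + s *: k0) by exists k', s.
  have := f0 _ Mk.
  by rewrite (lfD lf) (lfZ lf).
move: fm; rewrite (lfD lf) (lfZ lf) => fm.
have [fk|fk] := ltrP 0 (f k); first by exists k.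
by exists k0; split => //; nra.
Qed.

Definition convexS (R : realType) n (X : set 'rV[R]_n) :=
  forall x y lam, X x -> X y -> 0 <= lam <= 1 -> X (lam *: x + (1 - lam) *: y).

Lemma conv_base (R : realType) n (X : set 'rV[R]_n) x0 k (b : 'I_k -> 'rV[R]_n) (w : 'I_k -> R) :
  convexS X -> X x0 -> (forall l, X (x0 + b l)) -> (forall l, 0 <= w l) ->
  \sum_l w l <= 1 -> X (x0 + \sum_l w l *: b l).
Proof.
move=> Xc X0; elim: k b w => [|k IH] b w Xb w0 ws.
  by rewrite big_ord0 addr0.
rewrite big_ord_recr /=; rewrite big_ord_recr /= in ws.
set s := w ord_max in ws *.
have s1 : s <= 1.
  have : 0 <= \sum_(i < k) w (widen_ord (leqnSn k) i) by apply: sumr_ge0 => i _.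
  lra.
have [s_eq1|s_lt1] := eqVneq s 1.
  have z : forall i : 'I_k, w (widen_ord (leqnSn k) i) = 0.
    have S0 : \sum_(i < k) w (widen_ord (leqnSn k) i) = 0.
      apply/eqP; rewrite eq_le; apply/andP; split; last by apply: sumr_ge0 => j _.
      by move: ws; rewrite s_eq1; lra.
    move=> i; exact: (@psumr_eq0P R _ predT (fun i => w (widen_ord (leqnSn k) i)) (fun j _ => w0 _) S0 i isT).
  rewrite big1 ?add0r => [|i _]; last by rewrite z scale0r.
  by rewrite s_eq1 scale1r.
have s_lt : s < 1 by rewrite lt_neqAle s_lt1.
have hs : 0 < 1 - s by lra.
have := IH (fun i => b (widen_ord (leqnSn k) i)) (fun i => w (widen_ord (leqnSn k) i) / (1 - s)) _ _ _.
move=> /(_ (fun l => Xb _)) /(_ (fun l => divr_ge0 (w0 _) (ltW hs))) H.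
have : \sum_(i < k) w (widen_ord (leqnSn k) i) / (1 - s) <= 1.
  rewrite -mulr_suml ler_pdivrMr // mul1r; lra.
move/H => Hp.
have := Xc _ _ (1 - s) Hp (Xb ord_max) _.
have -> : 1 - (1 - s) = s by ring.
have -> : (1 - s) *: (x0 + \sum_(i < k) (w (widen_ord (leqnSn k) i) / (1 - s)) *: b (widen_ord (leqnSn k) i)) + s *: (x0 + b ord_max)
   = x0 + (\sum_(i < k) w (widen_ord (leqnSn k) i) *: b (widen_ord (leqnSn k) i) + w ord_max *: b ord_max).
  rewrite scalerDr scaler_sumr.
  under eq_bigr do rewrite scalerA mulrC -mulrA mulVf ?mulr1 ?lt0r_neq0 //.
  move: (\sum_(i < k) _) => S.
  apply/rowP => j; rewrite !mxE.
  rewrite -/s.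
  ring.
have := w0 ord_max; rewrite -/s => s0.
apply; apply/andP; split; lra.
Qed.

Lemma decomp_plus (R : realType) n (C : set 'rV[R]_n) k (S : 'I_k -> set 'rV[R]_n) x y lam :
  is_cone C -> (forall i, antichain_convex C (S i)) ->
  minkowski_sum S x -> minkowski_sum S y -> 0 <= lam <= 1 ->
  exists r (c : 'I_k -> 'rV[R]_n), minkowski_sum S r /\ (forall i, c i = 0 \/ C (c i)) /\
    lam *: x + (1 - lam) *: y = r + \sum_i c i.
Proof.
move=> Cc Sa [p [Sp ->]] [q [Sq ->]] hl.
have [l0 l1] : 0 <= lam /\ lam <= 1 by move/andP: hl.
have H : forall i, exists rc : 'rV[R]_n * 'rV[R]_n, S i rc.1 /\ (rc.2 = 0 \/ C rc.2) /\
    lam *: p i + (1 - lam) *: q i = rc.1 + rc.2.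
  move=> i; have [hC|hC] := pselect ((C `|` negset C) (q i - p i)); last first.
    exists (lam *: p i + (1 - lam) *: q i, 0); split; first exact: Sa.
    by split; [left | rewrite addr0].
  case: hC => [Cq | [c0 Cc0 e]].
    exists (p i, (1 - lam) *: (q i - p i)); split => //=; split.
      have [le1|le1] := eqVneq lam 1; first by left; rewrite le1 subrr scale0r.
      by right; apply: Cc => //; rewrite subr_gt0 lt_neqAle le1.
    by apply/rowP => j; rewrite !mxE; ring.
  exists (q i, lam *: c0); split => //=; split.
    have [le0|le0] := eqVneq lam 0; first by left; rewrite le0 scale0r.
    by right; apply: Cc => //; rewrite lt_neqAle eq_sym le0.
  apply/rowP => j; have := congr1 (fun v : 'rV[R]_n => v 0 j) e; rewrite !mxE => ej.
  rewrite ?mxE; have -> : c0 0 j = p i 0 j - q i 0 j by lra.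
  ring.
case/choice: H => F HF.
exists (\sum_i (F i).1), (fun i => (F i).2); split; [|split].
- by exists (fun i => (F i).1); split => // i; case: (HF i).
- by move=> i; case: (HF i) => _ [].
- rewrite !scaler_sumr -big_split -big_split /=; apply: eq_bigr => i _.
  by case: (HF i) => _ [].
Qed.

Lemma up_sum (R : realType) n (C X : set 'rV[R]_n) r k (c : 'I_k -> 'rV[R]_n) :
  upward C X -> X r -> (forall i, c i = 0 \/ C (c i)) -> X (r + \sum_i c i).
Proof.
move=> up Xr Hc; apply: (big_rec (fun s => X (r + s))) => [|i s _ Hs]; first by rewrite addr0.
rewrite addrCA addrC; case: (Hc i) => [->|Ci]; first by rewrite addr0.
exact: up.
Qed.

Lemma up_convex (R : realType) n (C X : set 'rV[R]_n) :
  is_cone C -> decomp_antichain_convex C X -> upward C X -> convexS X.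
Proof.
move=> Cc [k [S [Sa ->]]] up x y lam Xx Xy hl.
have [r [c [Sr [Hc ->]]]] := decomp_plus Cc Sa Xx Xy hl.
exact: (up_sum up Sr Hc).
Qed.

Lemma negsetK (R : realType) n (C : set 'rV[R]_n) : negset (negset C) = C.
Proof.
apply/seteqP; split => [v [_ [c Cc <-] <-]|v Cv]; first by rewrite opprK.
by exists (- v); [exists v | rewrite opprK].
Qed.

Lemma cone_neg (R : realType) n (C : set 'rV[R]_n) : is_cone C -> is_cone (negset C).
Proof. by move=> Cc t _ t0 [c Cc' <-]; exists (t *: c); [exact: Cc | rewrite scalerN]. Qed.

Lemma antichain_neg (R : realType) n (C S : set 'rV[R]_n) :
  antichain_convex C S -> antichain_convex (negset C) S.
Proof.
move=> Sa x y lam Sx Sy hl hn; apply: Sa => // hC; apply: hn.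
by case: hC => [Cv|Nv]; [right; rewrite negsetK | left].
Qed.

Lemma decomp_neg (R : realType) n (C X : set 'rV[R]_n) :
  decomp_antichain_convex C X -> decomp_antichain_convex (negset C) X.
Proof. by move=> [k [S [Sa ->]]]; exists k, S; split => // i; apply: antichain_neg. Qed.

Lemma down_up (R : realType) n (C X : set 'rV[R]_n) : downward C X -> upward (negset C) X.
Proof. by move=> dn x _ Xx [c Cc <-]; apply: dn. Qed.

Lemma decomp_minus (R : realType) n (C : set 'rV[R]_n) k (S : 'I_k -> set 'rV[R]_n) x y lam :
  is_cone C -> (forall i, antichain_convex C (S i)) ->
  minkowski_sum S x -> minkowski_sum S y -> 0 <= lam <= 1 ->
  exists r (c : 'I_k -> 'rV[R]_n), minkowski_sum S r /\ (forall i, c i = 0 \/ C (c i)) /\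
    lam *: x + (1 - lam) *: y = r - \sum_i c i.
Proof.
move=> Cc Sa Sx Sy hl.
have [r [c [Sr [Hc ->]]]] := decomp_plus (cone_neg Cc) (fun i => antichain_neg (Sa i)) Sx Sy hl.
exists r, (fun i => - c i); split => //; split; last by rewrite sumrN opprK.
move=> i; case: (Hc i) => [->|[c0 Cc0 <-]]; first by left; rewrite oppr0.
by right; rewrite opprK.
Qed.

Lemma span_exists (R : realType) n (X : set 'rV[R]_n) x0 :
  exists k (B : 'M[R]_(k, n)), (forall i, X (x0 + row i B)) /\
    forall x, X x -> (x - x0 <= B)%MS.
Proof.
pose P r := exists k (B : 'M[R]_(k, n)), (forall i, X (x0 + row i B)) /\ \rank B = r.
have ex : exists r, `[< P r >].
  exists 0%N; apply/asboolP; exists 0%N, (0 : 'M_(0, n)); split; first by case.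
  exact: mxrank0.
have ub : forall r, `[< P r >] -> (r <= n)%N.
  by move=> r /asboolP [k [B [_ <-]]]; exact: rank_leq_col.
case: (ex_maxnP ex ub) => r /asboolP [k [B [XB rB]]] maxr.
exists k, B; split => // x Xx.
have XB' : forall i, X (x0 + row i (col_mx B (x - x0))).
  move=> i; case: (splitP i) => j ij.
    have -> : i = lshift 1 j by apply: val_inj.
    by rewrite rowKu.
  have -> : i = rshift k j by apply: val_inj.
  rewrite rowKd; have -> : row j (x - x0) = x - x0.
    by apply/rowP => l; rewrite mxE ord1.
  by rewrite addrC subrK.
have Pr : `[< P (\rank (col_mx B (x - x0))) >].
  by apply/asboolP; exists (k + 1)%N, (col_mx B (x - x0)).
have := maxr _ Pr; rewrite -rB.
have sub1 : (B <= col_mx B (x - x0))%MS by rewrite -addsmxE addsmxSl.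
rewrite (geq_leqif (mxrank_leqif_sup sub1)) => sub2.
apply: submx_trans sub2; by rewrite -addsmxE addsmxSr.
Qed.

Definition coreB (R : realType) n (X : set 'rV[R]_n) k (B : 'M[R]_(k, n)) p :=
  X p /\ exists d, 0 < d /\ forall j t, `|t| <= d -> X (p + t *: row j B).

Lemma core_ri (R : realType) n (X : set 'rV[R]_n) x0 k (B : 'M[R]_(k, n)) p :
  convexS X -> (forall x, X x -> (x - x0 <= B)%MS) -> coreB X B p -> rel_interior X p.
Proof.
move=> Xc span [Xp [d [d0 Hd]]]; split => //.
set P := pinvmx B.
set M := \sum_j \sum_l `|P l j|.
have M0 : 0 <= M by apply: sumr_ge0 => j _; apply: sumr_ge0 => l _.
have kM0 : 0 < k%:R * M + 1 by have := mulr_ge0 (ler0n R k) M0; lra.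
set e := d / (k%:R * M + 1).
have e0 : 0 < e by rewrite divr_gt0.
exists e; split => // y [kk [w [q [Xq [ws ye]]]]] close.
have sub : (y - p <= B)%MS.
  have -> : y - p = \sum_i w i *: (q i - x0) - (p - x0).
    under [X in _ = X - _]eq_bigr do rewrite scalerBr.
    rewrite sumrB -scaler_suml ws scale1r ye.
    move: (\sum_i w i *: q i) => S.
    by apply/rowP => j; rewrite !mxE; ring.
  apply: addmx_sub; first by apply: summx_sub => i _; apply: scalemx_sub; apply: span.
  by rewrite -scaleN1r; apply: scalemx_sub; apply: span.
set u := y - p.
have uB := mulmxKpV sub.
set c := u *m P.
have ye2 : y = p + \sum_j (k%:R^-1) *: ((k%:R * c 0 j) *: row j B).
  have -> : y = p + u by rewrite /u addrC subrK.
  rewrite -[u in p + u]uB mulmx_sum_row; congr (_ + _); apply: eq_bigr => j _.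
  have kpos : (0 < k)%N := leq_ltn_trans (leq0n _) (ltn_ord j).
  by rewrite scalerA mulrA mulVf ?mul1r // pnatr_eq0 -lt0n kpos.
rewrite ye2; apply: conv_base => //.
- move=> j; apply: Hd.
  have cj : `|c 0 j| <= e * M.
    rewrite /c mxE; apply: le_trans (ler_norm_sum _ _ _) _.
    apply: (@le_trans _ _ (\sum_l e * `|P l j|)).
      apply: ler_sum => l _; rewrite normrM; apply: ler_wpM2r => //.
      by rewrite /u !mxE; exact: (ltW (close l)).
    rewrite -mulr_sumr; apply: ler_wpM2l; first exact: ltW.
    rewrite /M (bigD1 j) //= lerDl; apply: sumr_ge0 => i _; apply: sumr_ge0 => l _.
    exact: normr_ge0.
  rewrite normrM ger0_norm ?ler0n //.
  apply: le_trans (ler_wpM2l (ler0n _ k) cj) _.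
  have -> : k%:R * (e * M) = (d * (k%:R * M)) / (k%:R * M + 1).
    by rewrite /e; field; rewrite lt0r_neq0.
  rewrite ler_pdivrMr //; nra.
- rewrite sumr_const card_ord.
  case: k {B P M kM0 e e0 close ye2 uB c sub Hd M0 span} => [|k]; first by rewrite mulr0n ler01.
  by rewrite -(mulr_natr (k.+1%:R^-1)) mulVf // pnatr_eq0.
Qed.

Lemma core_exists (R : realType) n (X : set 'rV[R]_n) x0 k (B : 'M[R]_(k, n)) :
  convexS X -> X x0 -> (forall i, X (x0 + row i B)) -> exists z, coreB X B z.
Proof.
move=> Xc X0 XB.
have kp : (0 : R) < k%:R + 1 by have := ler0n R k; lra.
set a := (k%:R + 1 : R)^-1.
have a0 : 0 < a by rewrite invr_gt0.
have ka : k%:R * a + a = 1.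
  by rewrite /a; field; rewrite lt0r_neq0.
have sa : \sum_(l < k) a = k%:R * a by rewrite sumr_const card_ord mulr_natl.
exists (x0 + \sum_l a *: row l B); split.
  apply: conv_base => // [l|]; first exact: ltW.
  by rewrite sa; lra.
exists a; split => // j t ht.
have [ht1 ht2] : - a <= t /\ t <= a by move: ht; rewrite ler_norml => /andP.
have -> : x0 + \sum_l a *: row l B + t *: row j B =
    x0 + \sum_l (a + (if l == j then t else 0)) *: row l B.
  rewrite -addrA; congr (_ + _).
  under [RHS]eq_bigr do rewrite scalerDl.
  rewrite big_split /=; congr (_ + _).
  rewrite (bigD1 j) //= eqxx big1 ?addr0 // => l /negbTE ->.
  by rewrite scale0r.
apply: conv_base => //.
- move=> l; case: (l == j); lra.
- rewrite big_split /= sa (bigD1 j) //= eqxx big1 ?addr0 => [|l /negbTE -> //].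
  lra.
Qed.

Lemma core_seg (R : realType) n (X : set 'rV[R]_n) k (B : 'M[R]_(k, n)) p x' lam :
  convexS X -> coreB X B p -> X x' -> 0 < lam <= 1 ->
  coreB X B (lam *: p + (1 - lam) *: x').
Proof.
move=> Xc [Xp [d [d0 Hd]]] Xx /andP [l0 l1]; split.
  by apply: Xc => //; rewrite (ltW l0).
exists (lam * d); split; first exact: mulr_gt0.
move=> j t ht.
have -> : lam *: p + (1 - lam) *: x' + t *: row j B =
   lam *: (p + (t / lam) *: row j B) + (1 - lam) *: x'.
  apply/rowP => l; rewrite !mxE; field; exact: lt0r_neq0.
apply: Xc => //; last by rewrite (ltW l0).
apply: Hd; rewrite normrM (@gtr0_norm _ lam^-1) ?invr_gt0 //.
by rewrite ler_pdivrMr // mulrC.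
Qed.

Lemma core_rec (R : realType) n (X : set 'rV[R]_n) k (B : 'M[R]_(k, n)) p c :
  coreB X B p -> (forall x, X x -> X (x + c)) -> coreB X B (p + c).
Proof.
move=> [Xp [d [d0 Hd]]] Kc; split; first exact: Kc.
by exists d; split => // j t ht; rewrite addrAC; apply: Kc; apply: Hd.
Qed.

Lemma main1 (R : realType) n (C X Y : set 'rV[R]_n) :
  is_cone C -> X !=set0 -> Y !=set0 ->
  decomp_antichain_convex C X -> decomp_antichain_convex C Y ->
  upward C X -> rel_interior X `&` Y = set0 -> properly_separated X Y.
Proof.
move=> Cc [x0 Xx0] [y0 Yy0] dX [k [T [Ta Ye]]] up riY.
have Xc := up_convex Cc dX up.
pose K := [set c | forall x, X x -> X (x + c)].
have K0 : K 0 by move=> x Xx; rewrite addr0.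
have Kadd : forall a b, K a -> K b -> K (a + b).
  by move=> a b Ka Kb x Xx; rewrite addrA; apply: Kb; apply: Ka.
have Kfrac : forall t a, 0 <= t <= 1 -> K a -> K (t *: a).
  move=> t a ht Ka x Xx.
  have -> : x + t *: a = t *: (x + a) + (1 - t) *: x.
    by apply/rowP => j; rewrite !mxE; ring.
  by apply: Xc => //; apply: Ka.
have Ksum : forall m (c : 'I_m -> 'rV[R]_n), (forall i, c i = 0 \/ C (c i)) -> K (\sum_i c i).
  by move=> m c Hc x Xx; exact: (up_sum up Xx Hc).
pose W := [set v | exists y c, Y y /\ K c /\ v = y - c].
have Wc : convexS W.
  move=> _ _ lam [y1 [c1 [Y1 [K1 ->]]]] [y2 [c2 [Y2 [K2 ->]]]] hl.
  have [l0 l1] : 0 <= lam /\ lam <= 1 by move/andP: hl.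
  rewrite Ye in Y1 Y2.
  have [r [c [Sr [Hc e]]]] := decomp_minus Cc Ta Y1 Y2 hl.
  exists r, (\sum_i c i + (lam *: c1 + (1 - lam) *: c2)); split; first by rewrite Ye.
  split.
    apply: (Kadd); first exact: Ksum.
    by apply: (Kadd); apply: (Kfrac) => //; apply/andP; split; lra.
  have -> : lam *: (y1 - c1) + (1 - lam) *: (y2 - c2) =
     (lam *: y1 + (1 - lam) *: y2) - (lam *: c1 + (1 - lam) *: c2).
    by apply/rowP => j; rewrite !mxE; ring.
  rewrite e; move: (\sum_i c i) => S.
  by apply/rowP => j; rewrite !mxE; ring.
have [kb [B [XB span]]] := span_exists X x0.
have [z cz] := core_exists Xc Xx0 XB.
have riC : forall p, coreB X B p -> rel_interior X p := fun p => core_ri Xc span.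
pose KK := [set d | exists t x w, 0 < t /\ X x /\ W w /\ d = t *: (x - w)].
have KKadd : forall a b, KK a -> KK b -> KK (a + b).
  move=> _ _ [t [x [w [t0 [Xx [Ww ->]]]]]] [s [x' [w' [s0 [Xx' [Ww' ->]]]]]].
  have ts : 0 < t + s by lra.
  set lam := t / (t + s).
  have hl : 0 <= lam <= 1.
    apply/andP; split; first by rewrite divr_ge0 // ltW.
    by rewrite ler_pdivrMr // mul1r; lra.
  exists (t + s), (lam *: x + (1 - lam) *: x'), (lam *: w + (1 - lam) *: w').
  split => //; split; first exact: Xc.
  split; first exact: Wc.
  by apply/rowP => j; rewrite !mxE /lam; field; rewrite lt0r_neq0.
have KKscale : forall t a, 0 < t -> KK a -> KK (t *: a).
  move=> t _ t0 [s [x [w [s0 [Xx [Ww ->]]]]]].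
  by exists (t * s), x, w; split; [exact: mulr_gt0 | rewrite scalerA].
have [[k0 [KKk0 nk0]]|sym] := pselect (exists k0, KK k0 /\ ~ KK (- k0)).
  have [f [lf [f0 [_ [[t [x [w [t0 [Xx [Ww ->]]]]]] fk]]]]] := sep_cone2 KKadd KKscale KKk0 nk0.
  have fXW : forall x w, X x -> W w -> f w <= f x.
    move=> x' w' Xx' Ww'.
    have KK1 : KK (1 *: (x' - w')) by exists 1, x', w'; split => //; exact: ltr01.
    by have := f0 _ KK1; rewrite scale1r (lfB lf) subr_ge0.
  have fxw : f w < f x.
    by move: fk; rewrite (lfZ lf) (lfB lf) pmulr_rgt0 // subr_gt0.
  move: Ww => [y1 [c1 [Yy1 [Kc1 ew]]]].
  have Xx1 : X (x + c1) := Kc1 x Xx.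
  have strict : f y1 < f (x + c1).
    by move: fxw; rewrite ew (lfB lf) (lfD lf); lra.
  exists (fun v => - f v); split; first by move=> a u v; rewrite lf; ring.
  split.
    apply: ge_ereal_sup => _ [x' Xx' <-]; apply: le_ereal_inf_tmp => _ [y' Yy' <-].
    rewrite lee_fin lerN2; apply: fXW => //.
    by exists y', 0; split => //; split => //; rewrite subr0.
  apply: (@le_lt_trans _ _ (- f (x + c1))%:E).
    by apply: ereal_inf_lbound; exists (x + c1).
  apply: (@lt_le_trans _ _ (- f y1)%:E); first by rewrite lte_fin ltrN2.
  by apply: ereal_sup_ubound; exists y1.
exfalso.
have sym' : forall d, KK d -> KK (- d).
  by move=> d KKd; apply: contrapT => nd; apply: sym; exists d.
have Ww0 : W y0 by exists y0, 0; split => //; split => //; rewrite subr0.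
have KKz : KK (1 *: (z - y0)).
  exists 1, z, y0; split; first exact: ltr01.
  by split; [case: cz | split].
have [t [x' [w' [t0 [Xx' [Ww' e]]]]]] := sym' _ KKz.
set lam := (1 + t)^-1.
have t1 : 0 < 1 + t by lra.
have hl : 0 < lam <= 1.
  apply/andP; split; first by rewrite invr_gt0.
  by rewrite invr_le1 ?unitfE ?lt0r_neq0 //; lra.
have hl' : 0 <= lam <= 1 by case/andP: hl => a b; rewrite b (ltW a).
have Wq : W (lam *: y0 + (1 - lam) *: w') by apply: Wc.
have eq : lam *: y0 + (1 - lam) *: w' = lam *: z + (1 - lam) *: x'.
  apply/rowP => j; have := congr1 (fun v : 'rV[R]_n => v 0 j) e; rewrite !mxE => ej.
  have -> : 1 - lam = t * lam by rewrite /lam; field; rewrite lt0r_neq0.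
  have -> : y0 0 j = z 0 j + t * (x' 0 j - w' 0 j) by nra.
  ring.
have cq : coreB X B (lam *: z + (1 - lam) *: x') := core_seg Xc cz Xx' hl.
rewrite -eq in cq.
move: Wq => [y [c [Yy [Kc eqy]]]].
rewrite eqy in cq.
have := core_rec cq Kc; rewrite subrK => cy.
have : (rel_interior X `&` Y) y by split => //; apply: riC.
by rewrite riY.
Qed.

Theorem corollary4 (R : realType) (n : nat) (C X Y : set 'rV[R]_n) :
  is_cone C -> X !=set0 -> Y !=set0 ->
  decomp_antichain_convex C X -> decomp_antichain_convex C Y ->
  (upward C X -> rel_interior X `&` Y = set0 -> properly_separated X Y) /\
  (downward C X -> rel_interior X `&` Y = set0 -> properly_separated X Y).
Proof.
move=> Cc Xn Yn dX dY; split => [up riY|dn riY]; first exact: (main1 Cc Xn Yn dX dY up riY).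
apply: (@main1 R n (negset C)) => //.
- exact: cone_neg.
- exact: decomp_neg.
- exact: decomp_neg.
- exact: down_up.
Qed.
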